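(* Let $a>0$, $\epsilon>0$, $n\in\mathbb{N}$, $\sigma_n=n^{-a}$, and let $A_n(q_1,\dot q_1)=\frac12|\dot q_1|^2+\sigma_n(1-\cos q_1)$ on $\mathbb{R}$. Let $t_0<t_2$ and $\bar t_1,\tilde t_1\in(t_0,t_2)$. Let $\bar q_1$ be a solution of the Euler–Lagrange equation of $A_n$ on $(t_0,\bar t_1)$ and on $(\bar t_1,t_2)$ with $\bar q_1(t_0)=0$, $\bar q_1(\bar t_1)=\pi$, $\bar q_1(t_2)=2\pi$, and let $\tilde q_1$ be a solution of the Euler–Lagrange equation of $A_n$ on $(t_0,\tilde t_1)$ and on $(\tilde t_1,t_2)$ with $\tilde q_1(t_0)=0$, $\tilde q_1(\tilde t_1)=\pi$, $\tilde q_1(t_2)=2\pi$. Let $\bar\omega_1'=\pi/(\bar t_1-t_0)$, $\bar\omega_1''=\pi/(t_2-\bar t_1)$, $\tilde\omega_1'=\pi/(\tilde t_1-t_0)$, $\tilde\omega_1''=\pi/(t_2-\tilde t_1)$ be the corresponding average speeds and $|\omega_1|=\max\{|\bar\omega_1'|,|\bar\omega_1''|,|\tilde\omega_1'|,|\tilde\omega_1''|\}$. If $|\omega_1|<n^{-\frac a2-\epsilon}$, then $$\Big|\int_{t_0}^{t_2}A_n(\bar q_1,\dot{\bar q}_1)\,dt-\int_{t_0}^{t_2}A_n(\tilde q_1,\dot{\tilde q}_1)\,dt\Big|\le C_1|\bar t_1-\tilde t_1|\,\sigma_n\exp\Big(-\frac{C_2\sqrt{\sigma_n}}{|\omega_1|}\Big),$$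 where $C_1,C_2$ are positive constants independent of $n$. *)

(* Defs.v *)
From Stdlib Require Import Reals.
From Coquelicot Require Import Coquelicot.
Open Scope R_scope.

Definition sigma_n (a : R) (n : nat) : R := Rpower (INR n) (- a).

Definition Alag (s x v : R) : R := / 2 * v ^ 2 + s * (1 - cos x).

(* q solves the Euler-Lagrange equation of A (with sigma = s) on the open
   interval (t, t'):  d/dt (dA/dv) = dA/dx,  i.e.  q'' = s * sin q. *)
Definition EL_sol (s : R) (q : R -> R) (t t' : R) : Prop :=
  forall u, t < u < t' ->
    ex_derive q u /\ is_derive (Derive q) u (s * sin (q u)).

Definition broken_sol (s : R) (q : R -> R) (t0 t1 t2 : R) : Prop :=
  continuous_on (fun t => t0 <= t <= t2) q /\
  EL_sol s q t0 t1 /\ EL_sol s q t1 t2 /\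
  q t0 = 0 /\ q t1 = PI /\ q t2 = 2 * PI.

Definition action (s : R) (q : R -> R) (t0 t2 : R) : R :=
  RInt (fun t => Alag s (q t) (Derive q t)) t0 t2.

(* Main.v *)
Require Import Defs.
From Stdlib Require Import Reals.
From Coquelicot Require Import Coquelicot.
Open Scope R_scope.
From Stdlib Require Import Lra Psatz Classical.


Ltac rfix := unfold minus, plus, opp, zero, scal, mult; cbn -[Rinv RInt];
  try change (RinvImpl.Rinv 2) with (/ 2).

Lemma cont_pt (h : R -> R) x : continuous h x -> continuity_pt h x.
Proof. intros; apply continuity_pt_filterlim; auto. Qed.

Lemma const_lemma h a b : a < b -> (forall x, a <= x <= b -> continuous h x) ->
  (forall x, a < x < b -> is_derive h x 0) -> h b = h a.
Proof.
  intros Hab Hc Hd.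
  destruct (MVT_gen h a b (fun _ => 0)) as [c [_ Hc']].
  - rewrite Rmin_left, Rmax_right by lra. auto.
  - rewrite Rmin_left, Rmax_right by lra. intros; apply cont_pt; auto.
  - lra.
Qed.

Lemma mvt_le h dh a b : a < b -> (forall x, a <= x <= b -> continuous h x) ->
  (forall x, a < x < b -> is_derive h x (dh x)) -> (forall x, a < x < b -> dh x <= 0) -> h b <= h a.
Proof.
  intros Hab Hc Hd Hn.
  destruct (MVT_gen h a b (fun x => Rmin (dh x) 0)) as [c [_ Hc']].
  - rewrite Rmin_left, Rmax_right by lra. intros x Hx. rewrite Rmin_left by (apply Hn; auto). auto.
  - rewrite Rmin_left, Rmax_right by lra. intros; apply cont_pt; auto.
  - assert (Rmin (dh c) 0 <= 0) by apply Rmin_r. nra.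
Qed.

Lemma mvt_ge h dh a b : a < b -> (forall x, a <= x <= b -> continuous h x) ->
  (forall x, a < x < b -> is_derive h x (dh x)) -> (forall x, a < x < b -> 0 <= dh x) -> h a <= h b.
Proof.
  intros Hab Hc Hd Hn.
  destruct (MVT_gen h a b (fun x => Rmax (dh x) 0)) as [c [_ Hc']].
  - rewrite Rmin_left, Rmax_right by lra. intros x Hx. rewrite Rmax_left by (specialize (Hn x Hx); lra). auto.
  - rewrite Rmin_left, Rmax_right by lra. intros; apply cont_pt; auto.
  - assert (0 <= Rmax (dh c) 0) by apply Rmax_r. nra.
Qed.

Lemma sin_sq_le y : sin y ^ 2 <= y ^ 2.
Proof.
  assert (Hp : forall z, 0 < z -> Rabs (sin z) <= z).
  { intros z Hz. pose proof (sin_lt_x z Hz). destruct (Rle_dec 1 z).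
    - pose proof (SIN_bound z). unfold Rabs; destruct Rcase_abs; lra.
    - assert (0 < sin z) by (apply sin_gt_0; pose proof PI2_3_2; lra).
      rewrite Rabs_right; lra. }
  destruct (Rtotal_order y 0) as [H|[H|H]].
  - pose proof (Hp (-y) ltac:(lra)). rewrite sin_neg, Rabs_Ropp in H0.
    assert (Rabs (sin y) ^ 2 <= (-y)^2) by (apply pow_incr; split; [apply Rabs_pos|auto]).
    rewrite pow2_abs in H1. nra.
  - subst; rewrite sin_0; lra.
  - pose proof (Hp y H).
    assert (Rabs (sin y) ^ 2 <= y^2) by (apply pow_incr; split; [apply Rabs_pos|auto]).
    rewrite pow2_abs in H1. auto.
Qed.

Lemma one_minus_cos x : 1 - cos x = 2 * sin (x/2) ^ 2.
Proof. replace x with (2 * (x/2)) at 1 by field. rewrite cos_2a_sin. ring. Qed.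

Lemma omc_le x : 2 * (1 - cos x) <= x ^ 2.
Proof. rewrite one_minus_cos. pose proof (sin_sq_le (x/2)). nra. Qed.

Lemma sin_lb3 y : 0 <= y <= 2 -> y / 3 <= sin y.
Proof.
  intros Hy. pose proof (pre_sin_bound y 0 ltac:(lra) ltac:(lra)) as [H _].
  unfold sin_approx, sin_term in H. simpl in H. nra.
Qed.

Lemma omc_ge x : 0 <= x <= PI -> x ^ 2 / 9 <= 2 * (1 - cos x).
Proof.
  intros Hx. rewrite one_minus_cos. pose proof PI_4.
  pose proof (sin_lb3 (x/2) ltac:(lra)). nra.
Qed.
Definition clamp (c d t : R) := Rmax c (Rmin t d).

Lemma clamp_lip c d x y : c <= d -> Rabs (clamp c d y - clamp c d x) <= Rabs (y - x).
Proof. intros; unfold clamp, Rmax, Rmin; repeat destruct Rle_dec; unfold Rabs; repeat destruct Rcase_abs; lra. Qed.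

Lemma clamp_in c d t : c <= d -> c <= clamp c d t <= d.
Proof. intros; unfold clamp, Rmax, Rmin; repeat destruct Rle_dec; lra. Qed.

Lemma clamp_id c d t : c <= t <= d -> clamp c d t = t.
Proof. intros; unfold clamp, Rmax, Rmin; repeat destruct Rle_dec; lra. Qed.

Lemma clamp_cont c d (f : R -> R) : c <= d -> continuous_on (fun t => c <= t <= d) f ->
  forall x, continuous (fun t => f (clamp c d t)) x.
Proof.
  intros Hcd Hf x.
  apply filterlim_comp with (G := within (fun t => c <= t <= d) (locally (clamp c d x))).
  - intros P [eps HP]. exists eps. intros y Hy. apply HP.
    + unfold ball in *; simpl in *; unfold AbsRing_ball in *; unfold abs, minus, plus, opp in *; simpl in *.
      eapply Rle_lt_trans. apply clamp_lip; auto. exact Hy.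
    + apply clamp_in; auto.
  - apply Hf. apply clamp_in; auto.
Qed.



Definition vv (s H x : R) := sqrt (2*H + 2*s*(1 - cos x)).
Definition FF s H := RInt (vv s H) 0 PI.
Definition TT s H := RInt (fun x => / vv s H x) 0 PI.

Lemma arg_pos s H x : 0 < s -> 0 < H -> 0 < 2*H + 2*s*(1 - cos x).
Proof. intros; pose proof (COS_bound x); nra. Qed.

Lemma vv_pos s H x : 0 < s -> 0 < H -> 0 < vv s H x.
Proof. intros; apply sqrt_lt_R0, arg_pos; auto. Qed.

Lemma vv_sq s H x : 0 < s -> 0 < H -> vv s H x ^ 2 = 2*H + 2*s*(1 - cos x).
Proof. intros; unfold vv; rewrite pow2_sqrt; auto; apply Rlt_le, arg_pos; auto. Qed.

Lemma vv_ex_derive s H x : 0 < s -> 0 < H -> ex_derive (vv s H) x.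
Proof. intros. unfold vv. auto_derive. apply arg_pos; auto. Qed.

Lemma vv_cont s H x : 0 < s -> 0 < H -> continuous (vv s H) x.
Proof. intros; apply (@ex_derive_continuous R_AbsRing R_NormedModule), vv_ex_derive; auto. Qed.

Lemma ivv_cont s H x : 0 < s -> 0 < H -> continuous (fun x => / vv s H x) x.
Proof. intros; apply (@ex_derive_continuous R_AbsRing R_NormedModule). unfold vv. auto_derive.
  split. apply arg_pos; auto. split; auto. apply Rgt_not_eq, vv_pos; auto. Qed.

Lemma exRI (f : R -> R) a b : (forall x, continuous f x) -> ex_RInt f a b.
Proof. intros; apply (@ex_RInt_continuous R_CompleteNormedModule); auto. Qed.

Lemma prim (f : R -> R) al x : (forall y, continuous f y) -> is_derive (fun y => RInt f al y) x (f x).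
Proof.
  intros Hc. apply is_derive_RInt with (If := fun y => RInt f al y) (a := al).
  - apply filter_forall; intros; apply (RInt_correct f), exRI; auto.
  - auto.
Qed.

Lemma refl (f : R -> R) : (forall x, continuous f x) -> (forall x, f (2*PI - x) = f x) ->
  RInt f PI (2*PI) = RInt f 0 PI.
Proof.
  intros Hc Hs.
  assert (E1 : ex_RInt f (-1 * 0 + 2*PI) (-1 * PI + 2*PI)) by (apply exRI; auto).
  pose proof (RInt_comp_lin f (-1) (2*PI) 0 PI E1) as E.
  replace (-1 * 0 + 2*PI) with (2*PI) in E by ring.
  replace (-1 * PI + 2*PI) with PI in E by ring.
  rewrite <- (opp_RInt_swap f PI (2*PI)) in E by (apply exRI; auto).
  rewrite (RInt_ext _ (fun y => opp (f y))) in E.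
  2:{ intros; rfix. replace (-1 * x + 2*PI) with (2*PI - x) by ring. rewrite Hs. ring. }
  pose proof (@RInt_opp R_CompleteNormedModule f 0 PI ltac:(apply exRI; auto)) as E2.
  revert E E2; rfix. intros. lra.
Qed.

Lemma vv_refl s H x : vv s H (2*PI - x) = vv s H x.
Proof. unfold vv. rewrite cos_minus, cos_2PI, sin_2PI. f_equal; ring. Qed.


Lemma vv_half s Hi Hj x : 0 < s -> 0 < Hi -> 0 < Hj ->
  vv s Hi x + - vv s Hj x <= (Hi - Hj) * / vv s Hj x.
Proof.
  intros. pose proof (vv_sq s Hi x H H0). pose proof (vv_sq s Hj x H H1).
  pose proof (vv_pos s Hj x H H1). pose proof (vv_pos s Hi x H H0).
  set (p := vv s Hi x) in *. set (q := vv s Hj x) in *.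
  assert (q * (p - q) = ((p^2 - q^2) - (p-q)^2)/2) by field.
  assert (0 <= (p-q)^2) by apply pow2_ge_0.
  assert (q * (p - q) <= Hi - Hj) by lra.
  assert (E : (Hi - Hj) * / q - (p + - q) = ((Hi - Hj) - q * (p - q)) / q) by (field; lra).
  assert (0 <= ((Hi - Hj) - q * (p - q)) / q) by (apply Rdiv_le_0_compat; lra).
  lra.
Qed.

Lemma FF_half s Hi Hj : 0 < s -> 0 < Hi -> 0 < Hj -> FF s Hi - FF s Hj <= (Hi - Hj) * TT s Hj.
Proof.
  intros. pose proof PI_RGT_0.
  assert (L : RInt (fun x => vv s Hi x + - vv s Hj x) 0 PI <= RInt (fun x => (Hi - Hj) * / vv s Hj x) 0 PI).
  { apply RInt_le. lra.
    - apply exRI. intros. apply (continuous_plus (fun x => vv s Hi x) (fun x => - vv s Hj x)).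
      apply vv_cont; auto. apply (continuous_opp (fun x => vv s Hj x)). apply vv_cont; auto.
    - apply exRI. intros. apply (continuous_mult (fun _ => Hi - Hj) (fun x => / vv s Hj x)).
      apply continuous_const. apply ivv_cont; auto.
    - intros; apply vv_half; auto. }
  pose proof (@RInt_minus R_CompleteNormedModule (vv s Hi) (vv s Hj) 0 PI
     ltac:(apply exRI; intros; apply vv_cont; auto) ltac:(apply exRI; intros; apply vv_cont; auto)) as E1.
  pose proof (@RInt_scal R_CompleteNormedModule (fun x => / vv s Hj x) 0 PI (Hi - Hj)
     ltac:(apply exRI; intros; apply ivv_cont; auto)) as E2.
  revert E1 E2; rfix; intros E1 E2. unfold FF, TT. lra.
Qed.

Lemma compare s H1 H2 : 0 < s -> 0 < H1 -> 0 < H2 ->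
  Rabs ((FF s H1 - H1 * TT s H1) - (FF s H2 - H2 * TT s H2)) <= Rmax H1 H2 * Rabs (TT s H1 - TT s H2).
Proof.
  intros. pose proof (FF_half s H1 H2 H H0 H3). pose proof (FF_half s H2 H1 H H3 H0).
  pose proof (Rmax_l H1 H2). pose proof (Rmax_r H1 H2).
  set (M := Rmax H1 H2) in *. set (T1 := TT s H1) in *. set (T2 := TT s H2) in *.
  set (F1 := FF s H1) in *. set (F2 := FF s H2) in *.
  unfold Rabs; repeat destruct Rcase_abs; nra.
Qed.


Lemma TT_le s H : 0 < s -> 0 < H ->
  TT s H <= RInt (fun x => / sqrt (2*H + (sqrt s / 3)^2 * x^2)) 0 PI.
Proof.
  intros Hs HH. pose proof PI_RGT_0.
  assert (Hk : (sqrt s / 3)^2 = s / 9).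
  { replace ((sqrt s / 3)^2) with (sqrt s ^2 / 9) by field. rewrite pow2_sqrt; lra. }
  apply RInt_le. lra.
  - apply exRI; intros; apply ivv_cont; auto.
  - apply exRI; intros. apply (@ex_derive_continuous R_AbsRing R_NormedModule). auto_derive.
    assert (0 < 2 * H + sqrt s / 3 * (sqrt s / 3 * 1) * (x * (x * 1))) by (pose proof (pow2_ge_0 (sqrt s / 3 * x)); nra).
    split; auto. split; auto. apply Rgt_not_eq, sqrt_lt_R0; auto.
  - intros x Hx. rewrite Hk. apply Rinv_le_contravar.
    + apply sqrt_lt_R0. pose proof (pow2_ge_0 x). nra.
    + unfold vv. apply sqrt_le_1_alt. pose proof (omc_ge x ltac:(lra)). nra.
Qed.

Lemma prim_eval c k : 0 < c -> 0 < k ->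
  RInt (fun x => / sqrt (c + k^2 * x^2)) 0 PI
  = ln (k * PI + sqrt (c + k^2 * PI^2)) / k - ln (sqrt c) / k.
Proof.
  intros Hc Hk.
  assert (Hpos : forall x, 0 < c + k^2 * x^2) by (intros; pose proof (pow2_ge_0 x); nra).
  assert (Hpos2 : forall x, 0 < k * x + sqrt (c + k^2 * x^2)).
  { intros. assert (Rabs (k*x) < sqrt (c + k^2*x^2)).
    { rewrite <- (sqrt_pow2 (Rabs (k*x))) by apply Rabs_pos. apply sqrt_lt_1_alt.
      split. apply pow2_ge_0. rewrite pow2_abs. pose proof (Hpos x). nra. }
    unfold Rabs in H; destruct Rcase_abs; lra. }
  apply is_RInt_unique.
  replace (ln (k * PI + sqrt (c + k^2 * PI^2)) / k - ln (sqrt c) / k) with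
    (minus ((fun x => ln (k * x + sqrt (c + k^2 * x^2)) / k) PI) ((fun x => ln (k * x + sqrt (c + k^2 * x^2)) / k) 0)).
  2:{ rfix. assert (E0 : k * 0 + sqrt (c + k * (k * 1) * (0 * (0 * 1))) = sqrt c).
      { rewrite Rmult_0_r, Rplus_0_l. f_equal. ring. }
      rewrite E0. ring. }
  apply (@is_RInt_derive R_CompleteNormedModule (fun x => ln (k * x + sqrt (c + k^2 * x^2)) / k)).
  - intros x _. auto_derive.
    + pose proof (Hpos x) as A. pose proof (Hpos2 x) as B. simpl in A, B. repeat split; auto.
    + pose proof (Hpos x) as A. pose proof (Hpos2 x) as B. pose proof (sqrt_lt_R0 _ (Hpos x)) as C.
      simpl in A, B, C |- *.
      set (w := sqrt (c + k * (k * 1) * (x * (x * 1)))) in *. field. repeat split; lra.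
  - intros. apply (@ex_derive_continuous R_AbsRing R_NormedModule). auto_derive.
    pose proof (Hpos x) as A. simpl in A. repeat match goal with |- _ /\ _ => split end; auto; try (apply Rgt_not_eq, sqrt_lt_R0; auto).
Qed.

Lemma exp_le x y : x <= y -> exp x <= exp y.
Proof. intros H; destruct (Rle_lt_or_eq_dec _ _ H). apply Rlt_le, exp_increasing; auto. subst; lra. Qed.

Lemma Hbound s H : 0 < s -> 0 < H -> 3 <= sqrt s * TT s H ->
  H <= 8 * s * exp (- (2/3) * (sqrt s * TT s H)).
Proof.
  intros Hs HH HT.
  pose proof (sqrt_lt_R0 s Hs) as Hrs.
  pose proof (TT_le s H Hs HH) as T1.
  rewrite (prim_eval (2*H) (sqrt s / 3)) in T1 by lra.
  set (k := sqrt s / 3) in *. set (T := TT s H) in *. set (c := 2*H) in *.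
  assert (Hk2 : k^2 = s/9). { unfold k. replace ((sqrt s / 3)^2) with (sqrt s ^2 / 9) by field. rewrite pow2_sqrt; lra. }
  assert (Hk : 0 < k) by (unfold k; lra).
  assert (HkT : 1 <= k * T) by (unfold k; lra).
  set (P := k * PI) in *. pose proof PI_RGT_0. pose proof PI_4. pose proof PI2_3_2.
  assert (HP : 0 < P) by (unfold P; nra).
  set (r := sqrt c).
  assert (Hr : 0 < r) by (apply sqrt_lt_R0; unfold c; lra).
  assert (Hc : r^2 = c) by (apply pow2_sqrt; unfold c; lra).
  assert (Hc2 : c + k^2 * PI^2 = r^2 + P^2) by (unfold P; rewrite Hc; ring).
  rewrite Hc2 in T1.
  set (A := P + sqrt (r^2 + P^2)) in *.
  assert (HA : 0 < A) by (unfold A; pose proof (sqrt_pos (r^2 + P^2)); lra).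
  assert (T2 : k * T <= ln A - ln r).
  { change (sqrt c) with r in T1. apply (Rmult_le_compat_l k) in T1; [|lra].
    replace (k * (ln A / k - ln r / k)) with (ln A - ln r) in T1 by (field; lra). exact T1. }
  set (E := exp (k * T)).
  assert (HE : E * r <= A).
  { apply exp_le in T2. unfold Rminus in T2. rewrite exp_plus, exp_Ropp, !exp_ln in T2 by auto.
    fold E in T2. apply (Rmult_le_compat_r r) in T2; [|lra].
    replace (A * / r * r) with A in T2 by (field; lra). exact T2. }
  assert (HE2 : 2 <= E) by (unfold E; pose proof (exp_ineq1_le (k*T)); lra).
  assert (Hexp : exp (- (2/3) * (sqrt s * T)) = / (E * E)).
  { replace (- (2/3) * (sqrt s * T)) with (- (k*T) + - (k*T)) by (unfold k; field).
    rewrite exp_plus, exp_Ropp. unfold E. field. apply Rgt_not_eq, exp_pos. }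
  rewrite Hexp.
  destruct (Rle_lt_dec c (3 * P^2)) as [Hc3|Hc3].
  - assert (sqrt (r^2 + P^2) <= 2 * P).
    { rewrite <- (sqrt_pow2 (2*P)) by lra. apply sqrt_le_1_alt. nra. }
    assert (E * r <= 3 * P) by (unfold A in HE; lra).
    assert (Hr3 : r <= 3 * P / E) by (apply (Rmult_le_reg_l E); [lra|]; field_simplify; lra).
    assert (Hsq : r^2 <= (3*P/E)^2) by (apply pow_incr; lra).
    assert (HPk : P^2 = s/9 * PI^2) by (unfold P; rewrite <- Hk2; ring).
    assert (HH2 : H = r^2/2) by (rewrite Hc; unfold c; field).
    rewrite HH2. replace ((3*P/E)^2) with (9 * P^2 / (E*E)) in Hsq by (field; lra).
    rewrite HPk in Hsq.
    assert (PI^2 <= 16) by nra.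
    assert (0 < / (E*E)) by (apply Rinv_0_lt_compat; nra).
    replace (9 * (s / 9 * PI^2) / (E*E)) with (s * PI^2 * / (E*E)) in Hsq by (field; lra).
    set (X := / (E*E)) in *.
    assert (0 <= s * X * (16 - PI^2)) by (apply Rmult_le_pos; [apply Rmult_le_pos|]; lra).
    lra.
  - exfalso.
    assert (P^2 < r^2 / 3) by lra.
    assert (P < 6/10 * r) by nra.
    assert (sqrt (r^2 + P^2) < 117/100 * r).
    { rewrite <- (sqrt_pow2 (117/100 * r)) by lra. apply sqrt_lt_1_alt. split. nra. nra. }
    unfold A in HE. nra.
Qed.


Lemma der_cont (f : R -> R) x l : is_derive f x l -> continuous f x.
Proof. intros H. apply (@ex_derive_continuous R_AbsRing R_NormedModule). exists l; exact H. Qed.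

Lemma cont_comp_ed (f g : R -> R) x : continuous g x -> (forall y, ex_derive f y) ->
  continuous (fun t => f (g t)) x.
Proof. intros Hg Hf. apply (continuous_comp g f); auto.
  apply (@ex_derive_continuous R_AbsRing R_NormedModule); auto. Qed.

Lemma energy_der s (qe dq : R -> R) u : is_derive qe u (dq u) -> is_derive dq u (s * sin (qe u)) ->
  is_derive (fun u => /2 * dq u ^ 2 - s * (1 - cos (qe u))) u 0.
Proof.
  intros H1 H2.
  evar (l : R).
  assert (Hl : is_derive (fun u => /2 * dq u ^ 2 - s * (1 - cos (qe u))) u l).
  { apply @is_derive_minus.
    apply @is_derive_scal. apply @is_derive_pow. exact H2.
    apply @is_derive_scal. apply @is_derive_minus. apply @is_derive_const.
    apply @is_derive_comp. apply is_derive_cos. exact H1. }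
  replace 0 with l. exact Hl.
  subst l. rfix. field.
Qed.

Lemma energy_const s a b (qe dq : R -> R) : a < b ->
  (forall u, a < u < b -> is_derive qe u (dq u)) ->
  (forall u, a < u < b -> is_derive dq u (s * sin (qe u))) ->
  exists H, forall u, a < u < b -> /2 * dq u ^ 2 - s * (1 - cos (qe u)) = H.
Proof.
  intros Hab Hd Hdd.
  set (E := fun u => /2 * dq u ^ 2 - s * (1 - cos (qe u))).
  assert (HD : forall u, a < u < b -> is_derive E u 0) by (intros; apply energy_der; auto).
  exists (E ((a+b)/2)). intros u Hu. fold (E u).
  destruct (Rtotal_order u ((a+b)/2)) as [L|[L|L]].
  - symmetry. apply const_lemma. lra. intros x Hx. apply (der_cont E x 0), HD; lra.
    intros; apply HD; lra.
  - subst; auto.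
  - apply const_lemma. lra. intros x Hx. apply (der_cont E x 0), HD; lra.
    intros; apply HD; lra.
Qed.

Lemma near_end (p : R -> R) e a b eps : a < b -> (e = a \/ e = b) -> continuous p e -> 0 < eps ->
  exists t, a < t < b /\ Rabs (p t - p e) < eps.
Proof.
  intros Hab He Hc Heps.
  assert (L : locally e (fun t => ball (p e) eps (p t))).
  { apply Hc. apply (locally_ball (p e) (mkposreal eps Heps)). }
  destruct L as [d Hd].
  set (m := Rmin d (b - a) / 2).
  pose proof (cond_pos d).
  assert (0 < Rmin d (b-a)) by (apply Rmin_glb_lt; lra).
  assert (0 < m) by (unfold m; lra).
  assert (m < d) by (unfold m; pose proof (Rmin_l d (b-a)); pose proof (cond_pos d); lra).
  assert (m < b - a) by (unfold m; pose proof (Rmin_r d (b-a)); pose proof (cond_pos d);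
     unfold Rmin; destruct Rle_dec; lra).
  destruct He as [He|He]; subst e.
  - exists (a + m). split. lra. apply Hd. unfold ball; simpl; unfold AbsRing_ball, abs, minus, plus, opp; simpl.
    rewrite Rabs_right; lra.
  - exists (b - m). split. lra. apply Hd. unfold ball; simpl; unfold AbsRing_ball, abs, minus, plus, opp; simpl.
    rewrite Rabs_left; lra.
Qed.

Lemma H_nonneg s a b e (qe dq : R -> R) H : 0 < s -> a < b -> (e = a \/ e = b) ->
  (forall x, continuous qe x) -> cos (qe e) = 1 ->
  (forall u, a < u < b -> /2 * dq u ^ 2 - s * (1 - cos (qe u)) = H) -> 0 <= H.
Proof.
  intros Hs Hab He Hc Hcos HE.
  destruct (Rle_lt_dec 0 H) as [|HH]; auto. exfalso.
  set (p := fun t => s * (1 - cos (qe t))).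
  assert (Hp : continuous p e).
  { apply (cont_comp_ed (fun y => s * (1 - cos y)) qe); auto. intros; auto_derive; auto. }
  destruct (near_end p e a b (-H) Hab He Hp ltac:(lra)) as [t [Ht Hpt]].
  unfold p in Hpt. rewrite Hcos in Hpt. replace (s * (1 - 1)) with 0 in Hpt by ring.
  rewrite Rminus_0_r in Hpt. specialize (HE t Ht). pose proof (pow2_ge_0 (dq t)).
  apply Rabs_lt_between in Hpt. lra.
Qed.

Lemma absbound X Y r : Y ^ 2 <= r ^ 2 * X ^ 2 -> 0 <= r -> Rabs (X * Y) <= r * X ^ 2.
Proof.
  intros H Hr. apply Rsqr_incr_0_var.
  - unfold Rsqr. rewrite <- (Rabs_mult (X*Y) (X*Y)). rewrite Rabs_right by nra. nra.
  - nra.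
Qed.

Lemma mder (qe dq : R -> R) c K u : is_derive qe u (dq u) ->
  is_derive (fun t => (qe t - c) ^ 2 * exp (K * t)) u (exp (K * u) * (2 * (qe u - c) * dq u + K * (qe u - c) ^ 2)).
Proof.
  intros H1. evar (l : R).
  assert (Hl : is_derive (fun t => (qe t - c) ^ 2 * exp (K * t)) u l).
  { apply @is_derive_mult. apply @is_derive_pow. apply @is_derive_minus. exact H1. apply @is_derive_const.
    apply @is_derive_comp. apply is_derive_exp. apply @is_derive_scal. apply @is_derive_id.
    intros; apply Rmult_comm. }
  replace (exp (K * u) * (2 * (qe u - c) * dq u + K * (qe u - c) ^ 2)) with l. exact Hl.
  subst l. rfix. field.
Qed.

Lemma mcont (qe : R -> R) c K x : (forall y, continuous qe y) ->
  continuous (fun t => (qe t - c) ^ 2 * exp (K * t)) x.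
Proof.
  intros Hc. apply (continuous_mult (fun t => (qe t - c)^2) (fun t => exp (K * t))).
  - apply (cont_comp_ed (fun y => (y - c)^2) qe); auto. intros; auto_derive; auto.
  - apply (@ex_derive_continuous R_AbsRing R_NormedModule). auto_derive; auto.
Qed.

Lemma H_nonzero s a b al (qe dq : R -> R) : 0 < s -> a < b -> (al = 0 \/ al = PI) ->
  (forall x, continuous qe x) ->
  (forall u, a < u < b -> is_derive qe u (dq u)) ->
  qe a = al -> qe b = al + PI ->
  (forall u, a < u < b -> /2 * dq u ^ 2 - s * (1 - cos (qe u)) = 0) -> False.
Proof.
  intros Hs Hab Hal Hc Hd Ha Hb HE.
  pose proof (sqrt_lt_R0 s Hs) as Hrs. pose proof PI_RGT_0.
  assert (Hss : sqrt s ^ 2 = s) by (apply pow2_sqrt; lra).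
  assert (Key : forall c, (c = 0 \/ c = 2 * PI) -> forall u, a < u < b ->
            Rabs ((qe u - c) * dq u) <= sqrt s * (qe u - c) ^ 2).
  { intros c Hcc u Hu. apply absbound; [|lra]. rewrite Hss.
    specialize (HE u Hu). pose proof (omc_le (qe u - c)).
    assert (cos (qe u - c) = cos (qe u)).
    { destruct Hcc; subst c. f_equal; ring. rewrite cos_minus, cos_2PI, sin_2PI; ring. }
    rewrite H1 in H0. nra. }
  destruct Hal as [Hal|Hal]; subst al.
  - set (m := fun t => (qe t - 0) ^ 2 * exp (- (2 * sqrt s) * t)).
    assert (m b <= m a).
    { apply (mvt_le m (fun u => exp (- (2 * sqrt s) * u) * (2 * (qe u - 0) * dq u + - (2 * sqrt s) * (qe u - 0) ^ 2))).
      lra. intros; apply mcont; auto. intros; apply mder; auto.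
      intros u Hu. pose proof (Key 0 ltac:(auto) u Hu) as K1. pose proof (exp_pos (- (2 * sqrt s) * u)) as K2.
      apply Rabs_le_between in K1. nra. }
    unfold m in H0. rewrite Ha, Hb in H0.
    assert (0 < (0 + PI - 0)^2 * exp (- (2 * sqrt s) * b)) by (apply Rmult_lt_0_compat; [apply pow_lt; lra| apply exp_pos]).
    replace ((0 - 0)^2) with 0 in H0 by ring. lra.
  - set (m := fun t => (qe t - 2 * PI) ^ 2 * exp ((2 * sqrt s) * t)).
    assert (m a <= m b).
    { apply (mvt_ge m (fun u => exp ((2 * sqrt s) * u) * (2 * (qe u - 2 * PI) * dq u + (2 * sqrt s) * (qe u - 2 * PI) ^ 2))).
      lra. intros; apply mcont; auto. intros; apply mder; auto.
      intros u Hu. pose proof (Key (2*PI) ltac:(auto) u Hu) as K1. pose proof (exp_pos ((2 * sqrt s) * u)) as K2.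
      apply Rabs_le_between in K1. nra. }
    unfold m in H0. rewrite Ha, Hb in H0.
    assert (0 < (PI - 2 * PI)^2 * exp ((2 * sqrt s) * a)) by (apply Rmult_lt_0_compat; [replace ((PI - 2*PI)^2) with (PI^2) by ring; apply pow_lt; lra| apply exp_pos]).
    replace ((PI + PI - 2 * PI)^2) with 0 in H0 by ring. lra.
Qed.

Lemma cont_within (f : R -> R) (D : R -> Prop) : (forall x, D x -> continuous f x) -> continuous_on D f.
Proof.
  intros Hc x Dx P HP. unfold filtermap, within.
  apply filter_imp with (fun y => P (f y)). auto. apply (Hc x Dx P HP).
Qed.

Lemma dq_pos s a b (qe dq : R -> R) H : 0 < s -> a < b -> 0 < H ->
  (forall x, continuous qe x) ->
  (forall u, a < u < b -> is_derive qe u (dq u)) ->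
  (forall u, a < u < b -> is_derive dq u (s * sin (qe u))) ->
  qe a < qe b ->
  (forall u, a < u < b -> /2 * dq u ^ 2 - s * (1 - cos (qe u)) = H) ->
  forall u, a < u < b -> 0 < dq u.
Proof.
  intros Hs Hab HH Hc Hd Hdd Hab2 HE.
  assert (Hsq : forall u, a < u < b -> 2 * H <= dq u ^ 2).
  { intros u Hu. specialize (HE u Hu). pose proof (COS_bound (qe u)). nra. }
  intros u0 Hu0. destruct (Rlt_le_dec 0 (dq u0)) as [|Hneg]; auto. exfalso.
  destruct (classic (exists u1, a < u1 < b /\ 0 < dq u1)) as [[u1 [Hu1 Hp]] | Hn].
  - set (lo := Rmin u0 u1). set (hi := Rmax u0 u1).
    assert (Hlh : lo <= hi) by (unfold lo, hi, Rmin, Rmax; repeat destruct Rle_dec; lra).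
    assert (Hlo : a < lo) by (unfold lo, Rmin; destruct Rle_dec; lra).
    assert (Hhi : hi < b) by (unfold hi, Rmax; destruct Rle_dec; lra).
    set (g := fun t => dq (clamp lo hi t)).
    assert (Hg : forall x, continuous g x).
    { apply clamp_cont; auto. apply cont_within. intros x Hx. apply (der_cont dq x (s * sin (qe x))). apply Hdd. lra. }
    assert (Hglo : g lo = dq lo) by (unfold g; rewrite clamp_id; lra).
    assert (Hghi : g hi = dq hi) by (unfold g; rewrite clamp_id; lra).
    destruct (IVT_gen g lo hi 0) as [x [_ Hx]].
    + intros x; apply cont_pt; auto.
    + rewrite Hglo, Hghi. unfold lo, hi, Rmin, Rmax; repeat destruct Rle_dec; lra.
    + unfold g in Hx. pose proof (clamp_in lo hi x Hlh).
      pose proof (Hsq (clamp lo hi x) ltac:(lra)). rewrite Hx in H1. simpl in H1. lra.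
  - assert (qe b <= qe a).
    { apply (mvt_le qe dq a b Hab). intros; auto. auto.
      intros x Hx. destruct (Rle_lt_dec (dq x) 0); auto. exfalso; apply Hn; exists x; auto. }
    lra.
Qed.

Lemma RInt_minus_R (f g : R -> R) a b : ex_RInt f a b -> ex_RInt g a b ->
  RInt (fun x => f x - g x) a b = RInt f a b - RInt g a b.
Proof. intros. exact (@RInt_minus R_CompleteNormedModule f g a b H H0). Qed.

Lemma RInt_const_R (c a b : R) : RInt (fun _ => c) a b = c * (b - a).
Proof. rewrite (@RInt_const R_CompleteNormedModule). rfix. ring. Qed.

Lemma RInt_point_R (f : R -> R) a : RInt f a a = 0.
Proof. exact (@RInt_point R_CompleteNormedModule a f). Qed.

Lemma piece s a b al (qe dq : R -> R) :
  0 < s -> a < b -> (al = 0 \/ al = PI) ->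
  (forall x, continuous qe x) ->
  (forall u, a < u < b -> is_derive qe u (dq u)) ->
  (forall u, a < u < b -> is_derive dq u (s * sin (qe u))) ->
  qe a = al -> qe b = al + PI ->
  exists H, 0 < H /\ b - a = TT s H /\ (forall u, a < u < b -> dq u = vv s H (qe u)) /\
   RInt (fun t => vv s H (qe t) ^ 2 - H) a b = FF s H - H * (b - a).
Proof.
  intros Hs Hab Hal Hc Hd Hdd Ha Hb.
  pose proof PI_RGT_0 as HPI.
  destruct (energy_const s a b qe dq Hab Hd Hdd) as [H HE].
  assert (H0 : 0 <= H).
  { destruct Hal as [Hal|Hal].
    - apply (H_nonneg s a b a qe dq H); auto. rewrite Ha, Hal; apply cos_0.
    - apply (H_nonneg s a b b qe dq H); auto. rewrite Hb, Hal. replace (PI + PI) with (2*PI) by ring; apply cos_2PI. }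
  assert (HH : 0 < H).
  { destruct (Rle_lt_or_eq_dec _ _ H0) as [|E]; auto. exfalso. subst H.
    apply (H_nonzero s a b al qe dq); auto. }
  assert (Hp : forall u, a < u < b -> 0 < dq u).
  { apply (dq_pos s a b qe dq H); auto. lra. }
  assert (Hdv : forall u, a < u < b -> dq u = vv s H (qe u)).
  { intros u Hu. unfold vv. rewrite <- (sqrt_pow2 (dq u)) by (apply Rlt_le, Hp; auto).
    f_equal. specialize (HE u Hu). lra. }
  assert (Hvc : forall x, continuous (vv s H) x) by (intros; apply vv_cont; auto).
  assert (Hivc : forall x, continuous (fun x => / vv s H x) x) by (intros; apply ivv_cont; auto).
  exists H. split; auto. split; [|split; auto].
  -
    set (Psi := fun y => RInt (fun x => / vv s H x) al y).
    set (h := fun t => Psi (qe t) - t).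
    assert (Hhb : h b = h a).
    { apply const_lemma; auto.
      - intros x _. apply (continuous_minus (fun t => Psi (qe t)) (fun t => t)).
        apply (continuous_comp qe Psi); auto. apply (der_cont Psi (qe x) (/ vv s H (qe x))). apply (prim (fun x => / vv s H x) al (qe x)); auto.
        apply continuous_id.
      - intros u Hu. evar (l : R).
        assert (Hl : is_derive h u l).
        { unfold h. apply @is_derive_minus. apply @is_derive_comp. apply (prim (fun x => / vv s H x) al (qe u)); auto. apply Hd; auto.
          apply @is_derive_id. }
        replace 0 with l. exact Hl. subst l. rfix. rewrite Hdv by auto. field.
        apply Rgt_not_eq, vv_pos; auto. }
    unfold h, Psi in Hhb. rewrite Ha, Hb, RInt_point_R in Hhb.
    assert (RInt (fun x => / vv s H x) al (al + PI) = TT s H).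
    { unfold TT. destruct Hal; subst al. rewrite Rplus_0_l; auto.
      replace (PI + PI) with (2*PI) by ring. apply refl; auto. intros; rewrite vv_refl; auto. }
    lra.
  -
    set (w := fun t => vv s H (qe t) ^ 2).
    assert (Hw : forall x, continuous w x).
    { intros x. apply (cont_comp_ed (fun y => vv s H y ^ 2) qe); auto. intros y. unfold vv. auto_derive.
      apply arg_pos; auto. }
    set (Phi := fun y => RInt (vv s H) al y).
    set (h := fun t => Phi (qe t) - RInt w a t).
    assert (Hhb : h b = h a).
    { apply const_lemma; auto.
      - intros x _. apply (continuous_minus (fun t => Phi (qe t)) (fun t => RInt w a t)).
        apply (continuous_comp qe Phi); auto. apply (der_cont Phi (qe x) (vv s H (qe x))). apply (prim (vv s H) al (qe x)); auto.
        apply (der_cont (fun t => RInt w a t) x (w x)). apply (prim w a x); auto.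
      - intros u Hu. evar (l : R).
        assert (Hl : is_derive h u l).
        { unfold h. apply @is_derive_minus. apply @is_derive_comp. apply (prim (vv s H) al (qe u)); auto. apply Hd; auto.
          apply (prim w a u); auto. }
        replace 0 with l. exact Hl. subst l. rfix. unfold w. rewrite Hdv by auto. ring. }
    unfold h, Phi in Hhb. rewrite Ha, Hb, !RInt_point_R in Hhb.
    assert (RInt (vv s H) al (al + PI) = FF s H).
    { unfold FF. destruct Hal; subst al. rewrite Rplus_0_l; auto.
      replace (PI + PI) with (2*PI) by ring. apply refl; auto. intros; apply vv_refl. }
    rewrite (RInt_minus_R w (fun _ => H)).
    rewrite RInt_const_R. fold w in Hhb. lra.
    apply exRI; auto. apply exRI; intros; apply continuous_const.
Qed.

Lemma RInt_Chasles_R (f : R -> R) a b c : ex_RInt f a b -> ex_RInt f b c ->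
  RInt f a b + RInt f b c = RInt f a c.
Proof. intros X Y. exact (@RInt_Chasles R_CompleteNormedModule f a b c X Y). Qed.

Lemma piece_action s a b H (q qe : R -> R) : 0 < s -> 0 < H -> a < b ->
  (forall x, continuous qe x) ->
  (forall u, a < u < b -> q u = qe u) ->
  (forall u, a < u < b -> Derive q u = vv s H (qe u)) ->
  RInt (fun t => vv s H (qe t) ^ 2 - H) a b = FF s H - H * (b - a) ->
  ex_RInt (fun t => Alag s (q t) (Derive q t)) a b /\
  RInt (fun t => Alag s (q t) (Derive q t)) a b = FF s H - H * (b - a).
Proof.
  intros Hs HH Hab Hc Hq Hdq HR.
  assert (Heq : forall x, Rmin a b < x < Rmax a b -> vv s H (qe x) ^ 2 - H = Alag s (q x) (Derive q x)).
  { rewrite Rmin_left, Rmax_right by lra. intros x Hx. unfold Alag. rewrite Hq, Hdq by auto.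
    rewrite vv_sq by auto. field. }
  split.
  - apply (ex_RInt_ext _ _ a b Heq). apply exRI. intros x.
    apply (cont_comp_ed (fun y => vv s H y ^ 2 - H) qe); auto. intros y; unfold vv; auto_derive.
    apply arg_pos; auto.
  - rewrite <- (RInt_ext _ _ a b Heq). auto.
Qed.

Lemma sol_decomp s t0 t1 t2 q : 0 < s -> t0 < t1 < t2 -> broken_sol s q t0 t1 t2 ->
  exists H1 H2, 0 < H1 /\ 0 < H2 /\ t1 - t0 = TT s H1 /\ t2 - t1 = TT s H2 /\
  action s q t0 t2 = (FF s H1 - H1 * (t1 - t0)) + (FF s H2 - H2 * (t2 - t1)).
Proof.
  intros Hs Ht [Hcont [EL1 [EL2 [Q0 [Q1 Q2]]]]].
  set (qe := fun t => q (clamp t0 t2 t)).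
  assert (Hc : forall x, continuous qe x) by (apply clamp_cont; auto; lra).
  assert (Hqq : forall u, t0 <= u <= t2 -> q u = qe u) by (intros; unfold qe; rewrite clamp_id; auto).
  assert (Hloc : forall u, t0 < u < t2 -> locally u (fun t => q t = qe t)).
  { intros u Hu. assert (He : 0 < Rmin (u - t0) (t2 - u)) by (apply Rmin_glb_lt; lra).
    exists (mkposreal _ He). intros y Hy. unfold ball in Hy; simpl in Hy;
    unfold AbsRing_ball, abs, minus, plus, opp in Hy; simpl in Hy.
    pose proof (Rmin_l (u - t0) (t2 - u)). pose proof (Rmin_r (u - t0) (t2 - u)).
    apply Rabs_lt_between in Hy. apply Hqq. lra. }
  assert (HD : forall t t', EL_sol s q t t' -> t0 <= t -> t' <= t2 ->
     (forall u, t < u < t' -> is_derive qe u (Derive q u)) /\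
     (forall u, t < u < t' -> is_derive (Derive q) u (s * sin (qe u)))).
  { intros t t' HEL H1 H2. split; intros u Hu; destruct (HEL u Hu) as [E1 E2].
    - apply (is_derive_ext_loc q qe). apply Hloc; lra. apply Derive_correct; auto.
    - rewrite <- Hqq by lra. auto. }
  destruct (HD t0 t1 EL1 ltac:(lra) ltac:(lra)) as [Hd1 Hdd1].
  destruct (HD t1 t2 EL2 ltac:(lra) ltac:(lra)) as [Hd2 Hdd2].
  destruct (piece s t0 t1 0 qe (Derive q) Hs ltac:(lra) ltac:(auto) Hc Hd1 Hdd1)
    as [H1 [HH1 [HT1 [Hv1 HR1]]]].
  { rewrite <- Hqq by lra; auto. } { rewrite <- Hqq by lra; rewrite Q1; ring. }
  destruct (piece s t1 t2 PI qe (Derive q) Hs ltac:(lra) ltac:(auto) Hc Hd2 Hdd2)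
    as [H2 [HH2 [HT2 [Hv2 HR2]]]].
  { rewrite <- Hqq by lra; auto. } { rewrite <- Hqq by lra; rewrite Q2; ring. }
  destruct (piece_action s t0 t1 H1 q qe Hs HH1 ltac:(lra) Hc ltac:(intros; apply Hqq; lra) Hv1 HR1) as [X1 R1].
  destruct (piece_action s t1 t2 H2 q qe Hs HH2 ltac:(lra) Hc ltac:(intros; apply Hqq; lra) Hv2 HR2) as [X2 R2].
  exists H1, H2. repeat split; auto.
  unfold action. rewrite <- (RInt_Chasles_R _ t0 t1 t2 X1 X2). rewrite R1, R2. auto.
Qed.

Lemma aux_T (r om T : R) : 0 < om -> 0 < r -> om < r -> PI <= om * T ->
  3 <= r * T /\ - (2/3) * (r * T) <= - (1 * r / om).
Proof.
  intros Ho Hr Hor HT. pose proof PI2_3_2.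
  assert (0 < T) by nra.
  split. nra.
  assert ((2/3) * (r * T) - r / om = r * ((2/3) * T * om - 1) / om) by (field; lra).
  assert (0 <= r * ((2/3) * T * om - 1) / om) by (apply Rdiv_le_0_compat; [apply Rmult_le_pos; nra|lra]).
  lra.
Qed.

Lemma om_T (om T : R) : 0 < T -> Rabs (PI / T) <= om -> PI <= om * T.
Proof.
  intros HT H. pose proof PI_RGT_0. rewrite Rabs_right in H by (apply Rle_ge, Rlt_le, Rdiv_lt_0_compat; lra).
  apply (Rmult_le_compat_r T) in H; [|lra]. replace (PI / T * T) with PI in H by (field; lra). lra.
Qed.

Theorem lemma2p3 :
  forall a eps : R, 0 < a -> 0 < eps ->
  exists C1 C2 : R, 0 < C1 /\ 0 < C2 /\
  forall (n : nat) (t0 t2 bt1 tt1 : R) (bq tq : R -> R),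
    (1 <= n)%nat ->
    t0 < t2 -> t0 < bt1 < t2 -> t0 < tt1 < t2 ->
    broken_sol (sigma_n a n) bq t0 bt1 t2 ->
    broken_sol (sigma_n a n) tq t0 tt1 t2 ->
    let om := Rmax (Rmax (Rabs (PI / (bt1 - t0))) (Rabs (PI / (t2 - bt1))))
                   (Rmax (Rabs (PI / (tt1 - t0))) (Rabs (PI / (t2 - tt1)))) in
    om < Rpower (INR n) (- (a / 2) - eps) ->
    Rabs (action (sigma_n a n) bq t0 t2 - action (sigma_n a n) tq t0 t2)
      <= C1 * Rabs (bt1 - tt1) * sigma_n a n
           * exp (- (C2 * sqrt (sigma_n a n) / om)).
Proof.
  intros a eps Ha Heps. exists 16, 1. split; [lra|split; [lra|]].
  intros n t0 t2 bt1 tt1 bq tq Hn H02 Hb Ht Bsol Tsol om Hom.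
  set (s := sigma_n a n) in *.
  assert (Hn1 : 1 <= INR n) by (apply le_INR in Hn; simpl in Hn; lra).
  assert (Hs : 0 < s) by (unfold s, sigma_n, Rpower; apply exp_pos).
  assert (Hsq : sqrt s = Rpower (INR n) (- (a/2))).
  { unfold s, sigma_n. rewrite <- Rpower_sqrt by (unfold Rpower; apply exp_pos).
    rewrite Rpower_mult. f_equal. field. }
  assert (Hos : om < sqrt s).
  { rewrite Hsq. eapply Rlt_le_trans. apply Hom. apply Rle_Rpower; lra. }
  pose proof (Rmax_l (Rmax (Rabs (PI / (bt1 - t0))) (Rabs (PI / (t2 - bt1))))
                     (Rmax (Rabs (PI / (tt1 - t0))) (Rabs (PI / (t2 - tt1))))) as M1.
  pose proof (Rmax_r (Rmax (Rabs (PI / (bt1 - t0))) (Rabs (PI / (t2 - bt1))))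
                     (Rmax (Rabs (PI / (tt1 - t0))) (Rabs (PI / (t2 - tt1))))) as M2.
  fold om in M1, M2.
  pose proof (Rmax_l (Rabs (PI / (bt1 - t0))) (Rabs (PI / (t2 - bt1)))).
  pose proof (Rmax_r (Rabs (PI / (bt1 - t0))) (Rabs (PI / (t2 - bt1)))).
  pose proof (Rmax_l (Rabs (PI / (tt1 - t0))) (Rabs (PI / (t2 - tt1)))).
  pose proof (Rmax_r (Rabs (PI / (tt1 - t0))) (Rabs (PI / (t2 - tt1)))).
  assert (O1 : PI <= om * (bt1 - t0)) by (apply om_T; lra).
  assert (O2 : PI <= om * (t2 - bt1)) by (apply om_T; lra).
  assert (O3 : PI <= om * (tt1 - t0)) by (apply om_T; lra).
  assert (O4 : PI <= om * (t2 - tt1)) by (apply om_T; lra).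
  assert (Hom0 : 0 < om).
  { pose proof (Rabs_pos (PI / (bt1 - t0))). pose proof PI_RGT_0.
    destruct (Rle_lt_dec om 0); auto. assert (om * (bt1 - t0) <= 0) by nra. lra. }
  set (B := 8 * s * exp (- (1 * sqrt s / om))).
  assert (HB : forall G T, 0 < G -> T = TT s G -> PI <= om * T -> G <= B).
  { intros G T HH HT HoT. destruct (aux_T (sqrt s) om T Hom0 ltac:(lra) Hos HoT) as [A1 A2].
    rewrite HT in A1, A2. apply Rle_trans with (8 * s * exp (-(2/3) * (sqrt s * TT s G))). apply Hbound; auto.
    unfold B. apply Rmult_le_compat_l. lra. apply exp_le. auto. }
  destruct (sol_decomp s t0 bt1 t2 bq Hs ltac:(lra) Bsol) as [Hb1 [Hb2 [Pb1 [Pb2 [Tb1 [Tb2 Ab]]]]]].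
  destruct (sol_decomp s t0 tt1 t2 tq Hs ltac:(lra) Tsol) as [Ht1 [Ht2 [Pt1 [Pt2 [Tt1 [Tt2 At]]]]]].
  rewrite Ab, At.
  pose proof (compare s Hb1 Ht1 Hs Pb1 Pt1) as K1.
  pose proof (compare s Hb2 Ht2 Hs Pb2 Pt2) as K2.
  rewrite <- Tb1, <- Tt1 in K1. rewrite <- Tb2, <- Tt2 in K2.
  replace (bt1 - t0 - (tt1 - t0)) with (bt1 - tt1) in K1 by ring.
  replace (t2 - bt1 - (t2 - tt1)) with (- (bt1 - tt1)) in K2 by ring. rewrite Rabs_Ropp in K2.
  assert (Mx1 : Rmax Hb1 Ht1 <= B) by (apply Rmax_lub; [apply (HB Hb1 (bt1 - t0))|apply (HB Ht1 (tt1 - t0))]; auto).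
  assert (Mx2 : Rmax Hb2 Ht2 <= B) by (apply Rmax_lub; [apply (HB Hb2 (t2 - bt1))|apply (HB Ht2 (t2 - tt1))]; auto).
  pose proof (Rabs_pos (bt1 - tt1)).
  eapply Rle_trans. 
  2:{ apply Req_le. instantiate (1 := B * Rabs (bt1 - tt1) + B * Rabs (bt1 - tt1)). unfold B. ring. }
  eapply Rle_trans. 2: apply Rplus_le_compat.
  2: apply Rle_trans with (1 := K1); apply Rmult_le_compat_r; auto.
  2: apply Rle_trans with (1 := K2); apply Rmult_le_compat_r; auto.
  eapply Rle_trans. 2: apply Rabs_triang. apply Req_le. f_equal. rewrite Tb1, Tt1, Tb2, Tt2. ring.
Qed.
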